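(* Let $m>1$ and $k$ be positive integers. Then $\mathrm{msum}(mk+1,k)\ge k/2$.
   Context: For positive integers $n>k$, let $S_n$ be the set of permutations $\pi=(\pi_1,\dots,\pi_n)$ of $1,\dots,n$, with cyclic indexing $\pi_{n+i}=\pi_i$, and $s_i=\sum_{j=0}^{k-1}\pi_{i+j}$ for $i=1,\dots,n$. Define $\mathrm{msum}(\pi,k)=\max_{1\le i\le n}s_i-\frac{k(n+1)}{2}$ and $\mathrm{msum}(n,k)=\min_{\pi\in S_n}\mathrm{msum}(\pi,k)$. *)

(* Defs.v *)
From mathcomp Require Import all_boot all_order all_algebra.
Set Implicit Arguments. Unset Strict Implicit. Unset Printing Implicit Defensive.
Import Order.TTheory GRing.Theory Num.Theory.

(* A permutation pi = (pi_1,...,pi_n) of 1..n is a sequence p : seq nat with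
   perm_eq p (iota 1 n); pi_{t+1} = nth 0 p t (0-based storage).
   Cyclic indexing: pi_{n+i} = pi_i, i.e. 0-based index taken mod n. *)

(* s_{i+1} = sum_{j=0}^{k-1} pi_{i+1+j}, with i 0-based *)
Definition window (p : seq nat) (k i : nat) : nat :=
  \sum_(j < k) nth 0 p ((i + j) %% size p).

Definition msum_perm (p : seq nat) (k : nat) : rat :=
  ((\max_(i < size p) window p k i)%:R - (k * (size p).+1)%:R / 2)%R.

(* msum(n,k) = min over all permutations of 1..n of msum(pi,k).
   The seed (identity permutation) is itself among the permutations. *)
Definition msum (n k : nat) : rat :=
  \big[Order.min/msum_perm (iota 1 n) k]_(p <- permutations (iota 1 n))
     msum_perm p k.

(* Main.v *)
Require Import Defs.
From mathcomp Require Import all_boot all_order all_algebra.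
From mathcomp Require Import ring lra zify.
Import Order.TTheory GRing.Theory Num.Theory.

Lemma rot_sum (f : nat -> nat) n c : 0 < n ->
  \sum_(0 <= r < n) f ((c + r) %% n) = \sum_(0 <= r < n) f (r %% n).
Proof.
case: n => // n _; elim: c => [|c IH] //.
rewrite -IH.
have -> : \sum_(0 <= r < n.+1) f ((c.+1 + r) %% n.+1) = \sum_(0 <= r < n.+1) f ((c + r.+1) %% n.+1).
  by apply: eq_bigr => r _; rewrite addSnnS.
rewrite big_nat_recr // [RHS]big_nat_recl // [RHS]addnC /=; congr (_ + _).
by rewrite addn0 modnDr.
Qed.

Lemma sum_blocks (f : nat -> nat) m k :
  \sum_(0 <= r < m * k) f r = \sum_(0 <= t < m) \sum_(0 <= j < k) f (t * k + j).
Proof.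
elim: m => [|m IH]; first by rewrite mul0n !big_geq.
rewrite big_nat_recr //= -IH mulSn addnC.
rewrite (big_cat_nat _ (n := m * k)) ?leq_addr //=; congr (_ + _).
rewrite -{1}(add0n (m * k)) big_addn addKn.
by apply: eq_bigr => j _; rewrite addnC.
Qed.

Lemma sum_iota n : 2 * \sum_(x <- iota 1 n) x = n * n.+1.
Proof.
elim: n => [|n IH]; first by rewrite big_nil.
have -> : iota 1 n.+1 = iota 1 n ++ [:: n.+1] by rewrite -[n.+1]addn1 iotaD addnC.
rewrite big_cat /= big_seq1 mulnDr IH.
ring.
Qed.

Lemma key p m k : 0 < m -> perm_eq p (iota 1 (m*k+1)) ->
  k * (size p).+2 <= 2 * \max_(i < size p) window p k i.
Proof.
move=> m0 hp.
set n := m * k + 1.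
have sz : size p = n by rewrite (perm_size hp) size_iota.
have n0 : 0 < n by rewrite /n addn1.
have h1 : 1 \in p by rewrite (perm_mem hp) mem_iota /n; lia.
set i0 := index 1 p.
have hi0 : i0 < n by rewrite -sz index_mem.
have nth0 : nth 0 p i0 = 1 by rewrite nth_index.
set M := \max_(i < size p) window p k i.
have wM : forall x, window p k x <= M.
  move=> x; have H : x %% size p < size p by rewrite ltn_pmod // sz.
  apply: leq_trans (leq_bigmax (Ordinal H)).
  by rewrite /window leq_eqVlt; apply/orP; left; apply/eqP; apply: eq_bigr => j _; rewrite modnDml.
set f := fun r => nth 0 p (r %% n).
have tot : \sum_(0 <= r < n) f (i0.+1 + r) = \sum_(x <- iota 1 n) x.
  rewrite (rot_sum (fun r => nth 0 p r)) // -(perm_big _ hp) [RHS](big_nth 0) sz.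
  by apply: eq_big_nat => r /andP[_ hr]; rewrite modn_small.
have spl : \sum_(0 <= r < n) f (i0.+1 + r) = \sum_(0 <= r < m * k) f (i0.+1 + r) + 1.
  rewrite {1}/n addn1 big_nat_recr //=; congr (_ + _).
  rewrite /f; have -> : i0.+1 + m * k = i0 + n by rewrite /n; lia.
  by rewrite modnDr modn_small.
have blocks : \sum_(0 <= r < m * k) f (i0.+1 + r) <= m * M.
  rewrite sum_blocks.
  apply: leq_trans (_ : \sum_(0 <= t < m) M <= _); last by rewrite sum_nat_const_nat subn0.
  apply: leq_sum => t _.
  apply: leq_trans (wM (i0.+1 + t * k)).
  rewrite /window big_mkord sz leq_eqVlt; apply/orP; left; apply/eqP.
  by apply: eq_bigr => j _; rewrite /f addnA.
have si := sum_iota n.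
rewrite -tot spl in si.
rewrite sz -(leq_pmul2l m0).
move: blocks si; rewrite /n; set A := \sum_(0 <= r < m * k) f (i0.+1 + r).
nia.
Qed.

Lemma perm_bound p m k : 0 < m -> perm_eq p (iota 1 (m*k+1)) ->
  ((k%:R / 2 : rat) <= msum_perm p k)%R.
Proof.
move=> m0 hp; have H := key p m k m0 hp.
rewrite /msum_perm.
set M := \max_(i < size p) window p k i in H *.
have : ((k * (size p).+2)%:R <= (2 * M)%:R :> rat)%R by rewrite ler_nat.
rewrite -(addn2 (size p)) -(addn1 (size p)) !natrM !natrD; lra.
Qed.

Theorem lemma3p1 (m k : nat) (hm : (1 < m)%N) (hk : (0 < k)%N) :
  ((k%:R / 2 : rat) <= msum (m * k + 1) k)%R.
Proof.
have m0 : 0 < m by lia.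
rewrite /msum big_seq; apply: (big_ind (fun x : rat => (k%:R / 2 <= x)%R)).
- by apply: (perm_bound _ m k m0 (perm_refl _)).
- by move=> x y hx hy; rewrite le_min hx hy.
- by move=> p; rewrite mem_permutations; apply: (perm_bound _ m k m0).
Qed.
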